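(* Let $(I_t)_{t\in\mathbb{Z}}$ be a stochastic process such that there exists a family $(I_t^n)_{t\in\mathbb{Z}}$, $n\in\mathbb{N}$, of $\{0,1\}$-valued stationary stochastic processes with $P(I_0^n=1)>0$ for all $n\in\mathbb{N}$ and $$\mathcal{L}\bigl((I_t^n)_{t\in\{-u,\dots,v\}}\mid I_0^n=1\bigr)\Longrightarrow \mathcal{L}\bigl((I_t)_{t\in\{-u,\dots,v\}}\bigr)\quad (n\to\infty)$$ (weak convergence) for all $u,v\in\mathbb{N}$. Let $A\subset\mathbb{Z}$ with $0\in A$. Then $$P(I_t=1,\ t\in A)=P(I_{t-a}=1,\ t\in A)\quad\text{for all } a\in A.$$
   Context: $\mathcal{L}(\cdot\mid\cdot)$ denotes conditional law and $\Longrightarrow$ convergence in distribution. $\mathbb{N}=\{1,2,\dots\}$. *)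

(* Defs.v *)
From HB Require Import structures.
From mathcomp Require Import all_boot all_order all_algebra.
From mathcomp Require Import all_classical all_reals all_analysis.
Set Implicit Arguments. Unset Strict Implicit. Unset Printing Implicit Defensive.
Import Order.TTheory GRing.Theory Num.Theory.
Import numFieldNormedType.Exports.
Local Open Scope classical_set_scope.
Local Open Scope ring_scope.

Definition is_process d (T : measurableType d) (R : realType)
  (X : int -> T -> R) : Prop :=
  forall t, measurable_fun setT (X t).

(* Strict stationarity: all finite-dimensional distributions are shift
   invariant (stated on measurable rectangles, which generate the product
   sigma-algebra). *)
Definition stationary d (T : measurableType d) (R : realType)
  (P : probability T R) (X : int -> T -> R) : Prop :=
  forall (s : int) (ts : seq int) (B : int -> set R),
    (forall t, measurable (B t)) ->
    P (\bigcap_(t in [set` ts]) (X (t + s)%R @^-1` B t)) =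
    P (\bigcap_(t in [set` ts]) (X t @^-1` B t)).

Definition window d (T : measurableType d) (R : realType)
  (X : int -> T -> R) (u v : nat) (w : T) : 'rV[R]_(u + v).+1 :=
  \row_(i < (u + v).+1) X (i%:Z - u%:Z)%R w.

Definition bounded_continuous (R : realType) (k : nat)
  (f : 'rV[R]_k -> R) : Prop :=
  continuous f /\ exists M : R, forall x, `|f x| <= M.

Definition cond_expect d (T : measurableType d) (R : realType)
  (P : probability T R) (B : set T) (g : T -> R) : R :=
  Rintegral P B g / fine (P B).

(* Main.v *)
From HB Require Import structures.
From mathcomp Require Import all_boot all_order all_algebra.
From mathcomp Require Import all_classical all_reals all_analysis.
From mathcomp Require Import zify.
Set Implicit Arguments. Unset Strict Implicit. Unset Printing Implicit Defensive.
Import Order.TTheory GRing.Theory Num.Theory.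
Import numFieldNormedType.Exports.
Local Open Scope classical_set_scope.
Local Open Scope ring_scope.
Require Import Defs.

Definition clamp (R : realType) (y : R) : R := Num.min 1 (Num.max 0 y).

Lemma clamp_continuous (R : realType) : continuous (@clamp R).
Proof.
have -> : @clamp R = (cst 1) \min ((cst 0) \max id) by [].
apply: min_fun_continuous; first exact: cst_continuous.
apply: max_fun_continuous; first exact: cst_continuous.
by move=> x.
Qed.

Lemma clamp0 (R : realType) : clamp (0 : R) = 0.
Proof. by rewrite /clamp maxxx; apply/min_idPr; exact: ler01. Qed.
Lemma clamp1 (R : realType) : clamp (1 : R) = 1.
Proof. by rewrite /clamp (max_idPr (@ler01 R)) minxx. Qed.
Lemma clamp_ge0 (R : realType) (y : R) : 0 <= clamp y.
Proof. by rewrite /clamp le_min ler01 le_max lexx. Qed.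
Lemma clamp_le1 (R : realType) (y : R) : clamp y <= 1.
Proof. by rewrite /clamp ge_min lexx. Qed.

Definition idx (u v : nat) (t : int) : 'I_(u + v).+1 := inord (absz (t + u%:Z)).

Lemma window_idx d (T : measurableType d) (R : realType) (X : int -> T -> R)
  (u v : nat) (t : int) w :
  (- (u%:Z) <= t)%R -> (t <= v%:Z)%R ->
  window X u v w ord0 (idx u v t) = X t w.
Proof.
move=> h1 h2; have h0 : (0 <= t + u%:Z)%R by rewrite -lerBlDr sub0r.
rewrite /window mxE /idx inordK.
  by rewrite gez0_abs ?addrK.
by rewrite ltnS -(@lez_nat) gez0_abs // PoszD [t + _]addrC lerD2l.
Qed.
Definition Fs (R : realType) (u v : nat) (s : seq int) (x : 'rV[R]_(u + v).+1) : R :=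
  \prod_(t <- s) clamp (x ord0 (idx u v t)).

Lemma Fs_continuous (R : realType) u v s : continuous (@Fs R u v s).
Proof.
rewrite /Fs; elim: s => [|t s IH].
  have -> : (fun x : 'rV[R]_(u + v).+1 => \prod_(t <- [::]) clamp (x ord0 (idx u v t))) = cst 1.
    by apply/funext => x; rewrite big_nil.
  exact: cst_continuous.
have -> : (fun x : 'rV[R]_(u + v).+1 => \prod_(t0 <- t :: s) clamp (x ord0 (idx u v t0))) =
  (fun x => clamp (x ord0 (idx u v t))) \* (fun x => \prod_(t0 <- s) clamp (x ord0 (idx u v t0))).
  by apply/funext => x; rewrite big_cons.
move=> x.
have h1 : {for x, continuous (fun x : 'rV[R]_(u+v).+1 => clamp (x ord0 (idx u v t)))}.
  apply: (@continuous_comp _ _ _ (fun M : 'rV[R]_(u + v).+1 => M ord0 (idx u v t)) (@clamp R)).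
    exact: coord_continuous.
  exact: clamp_continuous.
exact: (continuousM h1 (IH x)).
Qed.

Lemma prod_clamp_ge0 (R : realType) (h : int -> R) s : 0 <= \prod_(t <- s) clamp (h t).
Proof. by elim: s => [|t s IH]; rewrite ?big_nil ?big_cons ?ler01 // mulr_ge0 // clamp_ge0. Qed.

Lemma prod_clamp_le1 (R : realType) (h : int -> R) s : \prod_(t <- s) clamp (h t) <= 1.
Proof.
elim: s => [|t s IH]; rewrite ?big_nil ?big_cons //.
by apply: mulr_ile1 => //; [exact: clamp_ge0|exact: prod_clamp_ge0|exact: clamp_le1].
Qed.

Lemma Fs_bounded (R : realType) u v s : bounded_continuous (@Fs R u v s).
Proof.
split; first exact: Fs_continuous.
exists 1 => x; rewrite /Fs ger0_norm ?prod_clamp_ge0 //; exact: prod_clamp_le1.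
Qed.

Definition Eset d (T : measurableType d) (R : realType) (X : int -> T -> R) (s : seq int) : set T :=
  \bigcap_(t in [set` s]) (X t @^-1` [set 1]).

Lemma Eset_measurable d (T : measurableType d) (R : realType) (X : int -> T -> R) s :
  is_process X -> measurable (Eset X s).
Proof.
move=> mX; apply: fin_bigcap_measurable; first exact: finite_seq.
move=> t _; rewrite -[X t @^-1` _]setTI; apply: (mX t) => //; exact: measurable_set1.
Qed.

Lemma prod_clamp_indic d (T : measurableType d) (R : realType) (X : int -> T -> R) s w :
  (forall t, t \in s -> X t w = 0 \/ X t w = 1) ->
  \prod_(t <- s) clamp (X t w) = \1_(Eset X s) w.
Proof.
move=> h01; rewrite indicE; have [wE|wE] := boolP (w \in Eset X s).
  move: wE; rewrite in_setE /Eset => wE.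
  rewrite big1_seq // => t /andP[_ ts]; rewrite (wE t ts) clamp1 //.
apply/eqP; rewrite prodf_seq_eq0; apply/negPn/negP => /hasPn H.
move/negP: wE; apply; rewrite in_setE /Eset => t /= ts.
have [X0|//] := h01 t ts.
by move: (H t ts); rewrite X0 clamp0 eqxx.
Qed.

Lemma prod_clamp_measurable d (T : measurableType d) (R : realType) (X : int -> T -> R) s :
  is_process X -> measurable_fun setT (fun w => \prod_(t <- s) clamp (X t w)).
Proof.
move=> mX; apply: measurable_prod => t _.
apply: (measurableT_comp (f := @clamp R)); last exact: mX.
exact: measurable_realfun.continuous_measurable_fun (@clamp_continuous R).
Qed.

Lemma Rint_Fs d (T : measurableType d) (R : realType) (Q : probability T R)
  (X : int -> T -> R) (u v : nat) (s : seq int) (D : set T) :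
  is_process X -> measurable D ->
  (forall t, t \in s -> (- (u%:Z) <= t)%R /\ (t <= v%:Z)%R) ->
  (\forall w \ae Q, forall t, t \in s -> X t w = 0 \/ X t w = 1) ->
  Rintegral Q D (@Fs R u v s \o window X u v) = fine (Q (Eset X s `&` D)).
Proof.
move=> mX mD hb hae.
have eqF : (@Fs R u v s \o window X u v) = fun w => \prod_(t <- s) clamp (X t w).
  apply/funext => w; rewrite /Fs /=; apply: eq_big_seq => t ts.
  by have [h1 h2] := hb t ts; rewrite window_idx.
rewrite eqF /Rintegral; congr fine.
rewrite -(integral_indic Q mD (Eset_measurable s mX)).
apply: ae_eq_integral => //.
- apply/measurable_realfun.measurable_EFinP.
  apply: (measurable_funS measurableT) => //; exact: prod_clamp_measurable.
- apply/measurable_realfun.measurable_EFinP.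
  by apply: measurable_realfun.measurable_indic; exact: Eset_measurable.
- apply: filterS hae => w h _.
  by rewrite prod_clamp_indic.
Qed.

Definition rho (R : realType) (y : R) : R := Num.min 1 `|y * (y - 1)|.

Lemma rho_continuous (R : realType) : continuous (@rho R).
Proof.
have h1 : continuous (fun y : R => y - 1).
  move=> y; apply: cvgB; [exact: cvg_id|exact: cvg_cst].
have h2 : continuous (fun y : R => y * (y - 1)).
  move=> y; apply: cvgM; [exact: cvg_id|exact: h1].
have h3 : continuous (fun y : R => `|y * (y - 1)|).
  move=> y; apply: (continuous_comp (h2 y)); exact: norm_continuous.
have -> : @rho R = (cst 1) \min (fun y : R => `|y * (y - 1)|) by [].
apply: min_fun_continuous => //; exact: cst_continuous.
Qed.

Lemma rho_ge0 (R : realType) (y : R) : 0 <= rho y.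
Proof. by rewrite /rho le_min ler01 normr_ge0. Qed.
Lemma rho_le1 (R : realType) (y : R) : rho y <= 1.
Proof. by rewrite /rho ge_min lexx. Qed.
Lemma rho01 (R : realType) (y : R) : y = 0 \/ y = 1 -> rho y = 0.
Proof.
by case=> ->; rewrite /rho ?mul0r ?subrr ?mulr0 normr0; apply/min_idPr; exact: ler01.
Qed.
Lemma rho_eq0 (R : realType) (y : R) : rho y = 0 -> y = 0 \/ y = 1.
Proof.
rewrite /rho; case: (lerP 1 `|y * (y - 1)|) => h.
  by move=> /eqP; rewrite oner_eq0.
move=> /eqP; rewrite normr_eq0 mulf_eq0 subr_eq0.
by case/orP => /eqP ->; [left|right].
Qed.

Definition Gt (R : realType) (u v : nat) (t : int) (x : 'rV[R]_(u + v).+1) : R :=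
  rho (x ord0 (idx u v t)).

Lemma Gt_bounded (R : realType) u v t : bounded_continuous (@Gt R u v t).
Proof.
split.
  move=> x; apply: (@continuous_comp _ _ _ (fun M : 'rV[R]_(u + v).+1 => M ord0 (idx u v t)) (@rho R)).
    exact: coord_continuous.
  exact: rho_continuous.
by exists 1 => x; rewrite /Gt ger0_norm ?rho_ge0 ?rho_le1.
Qed.

Lemma ae01 d (T : measurableType d) (R : realType) (Q : probability T R)
  (X : int -> T -> R) (u v : nat) (t : int) :
  is_process X ->
  (- (u%:Z) <= t)%R -> (t <= v%:Z)%R ->
  Rintegral Q setT (@Gt R u v t \o window X u v) = 0 ->
  \forall w \ae Q, X t w = 0 \/ X t w = 1.
Proof.
move=> mX h1 h2.
have eqF : (@Gt R u v t \o window X u v) = fun w => rho (X t w).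
  by apply/funext => w; rewrite /Gt /= window_idx.
have mf : measurable_fun setT (fun w => rho (X t w)).
  apply: (measurableT_comp (f := @rho R)); last exact: mX.
  exact: measurable_realfun.continuous_measurable_fun (@rho_continuous R).
rewrite eqF /Rintegral => hf.
have ge0 : (0 <= \int[Q]_(x in setT) (rho (X t x))%:E)%E.
  by apply: integral_ge0 => x _; rewrite lee_fin rho_ge0.
have le1 : (\int[Q]_(x in setT) (rho (X t x))%:E <= 1)%E.
  apply: (@le_trans _ _ (\int[Q]_(x in setT) (cst 1%:E x))%E).
    apply: ge0_le_integral => //.
    - by move=> x _; rewrite lee_fin rho_ge0.
    - exact/measurable_realfun.measurable_EFinP.
    - by move=> x _; rewrite lee_fin rho_le1.
  rewrite integral_cst // mul1e; exact: probability_le1.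
have i0 : (\int[Q]_(x in setT) (rho (X t x))%:E = 0)%E.
  have fin : (\int[Q]_(x in setT) (rho (X t x))%:E)%E \is a fin_num.
    by rewrite ge0_fin_numE // (le_lt_trans le1) ?ltry.
  by rewrite -(fineK fin) hf.
have : ae_eq Q setT (fun x => (rho (X t x))%:E) (cst 0%E).
  apply/(ae_eq_integral_abs Q measurableT).
    exact/measurable_realfun.measurable_EFinP.
  rewrite -i0; apply: eq_integral => x _; rewrite gee0_abs // lee_fin rho_ge0 //.
rewrite /ae_eq => hae; apply: filterS hae => w /(_ I) /= [] h; exact: rho_eq0.
Qed.

Lemma ae_all d (T : measurableType d) (R : realType) (Q : probability T R)
  (Pr : int -> T -> Prop) (s : seq int) :
  (forall t, \forall w \ae Q, Pr t w) -> \forall w \ae Q, forall t, t \in s -> Pr t w.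
Proof.
move=> h; elim: s => [|t s IH].
  by apply: aeW => w t; rewrite in_nil.
move: (h t) IH; apply: filterS2 => w h1 h2 t'.
by rewrite in_cons => /orP[/eqP->//|]; exact: h2.
Qed.

Lemma abs_le_sum (r : seq int) t : t \in r -> (absz t <= \sum_(x <- r) absz x)%N.
Proof. by move=> tr; rewrite (big_rem t tr) /=; exact: leq_addr. Qed.

Lemma Eset_shift d (T : measurableType d) (R : realType) (X : int -> T -> R) (a : int) s :
  Eset (fun t => X (t - a)) s = Eset X [seq t - a | t <- s].
Proof.
rewrite /Eset; apply/seteqP; split => w /= h t.
  by move=> /mapP [t0 t0s ->]; exact: h.
by move=> ts; apply: h; apply/mapP; exists t.
Qed.

Unset Implicit Arguments.

Theorem theorem2p1 (R : realType)
  (d : measure_display) (T : measurableType d) (P : probability T R)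
  (I : int -> T -> R)
  (dn : nat -> measure_display) (Tn : forall n, measurableType (dn n))
  (Pn : forall n, probability (Tn n) R)
  (In : forall n, int -> Tn n -> R) :
  is_process I ->
  (forall n, is_process (In n)) ->
  (forall n t w, In n t w = 0 \/ In n t w = 1) ->
  (forall n, stationary (Pn n) (In n)) ->
  (forall n, (0%E < Pn n [set w | In n 0%R w = 1%R])%E) ->
  (forall u v : nat, (0 < u)%N -> (0 < v)%N ->
     forall f : 'rV[R]_(u + v).+1 -> R, bounded_continuous f ->
     (fun n => cond_expect (Pn n) [set w | In n 0 w = 1]
                  (f \o window (In n) u v)) @ \oo
       --> Rintegral P setT (f \o window I u v)) ->
  forall A : set int, 0 \in A ->
  forall a, a \in A ->
    P (\bigcap_(t in A) (I t @^-1` [set 1])) =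
    P (\bigcap_(t in A) (I (t - a) @^-1` [set 1])).
Proof.
move=> mI mIn h01n stat pos lim A A0 a aA.
pose B n := [set w | In n 0 w = 1].
have mB : forall n, measurable (B n).
  move=> n; have -> : B n = In n 0 @^-1` [set 1] by [].
  rewrite -[X in measurable X]setTI.
  by apply: (mIn n 0) => //; exact: measurable_set1.
have aeI : forall t, \forall w \ae P, I t w = 0 \/ I t w = 1.
  move=> t; pose u := (absz t).+1.
  apply: (ae01 (u:=u) (v:=u) mI); [lia | lia | ].
  have H := lim u u isT isT _ (Gt_bounded R u u t).
  suff E : (fun n => cond_expect (Pn n) [set w | In n 0 w = 1] (@Gt R u u t \o window (In n) u u)) = cst 0.
    by move: H; rewrite E => /norm_cvg_lim <-; rewrite norm_lim_cst.
  apply/funext => n; rewrite /cond_expect.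
  rewrite (@eq_Rintegral _ _ _ _ _ (fun _ => 0%R)); first by rewrite Rintegral_cst ?mul0r.
  move=> w _; rewrite /Gt /= window_idx; [exact: rho01 | lia | lia].
have fin : forall s : seq int, 0 \in s -> a \in s ->
    P (Eset I s) = P (Eset (fun t => I (t - a)) s).
  move=> s s0 sa.
  pose s' := [seq t - a | t <- s].
  have s'0 : 0 \in s' by apply/mapP; exists a => //; rewrite subrr.
  pose N := (\sum_(x <- s ++ s') absz x)%N.
  pose u := N.+1.
  have hb : forall r : seq int, {subset r <= s ++ s'} -> forall t, t \in r ->
      (- (u%:Z) <= t)%R /\ (t <= u%:Z)%R.
    by move=> r rs t tr; have := abs_le_sum (rs t tr); rewrite -/N => ?; split; lia.
  have ss : {subset s <= s ++ s'} by move=> t ts; rewrite mem_cat ts.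
  have ss' : {subset s' <= s ++ s'} by move=> t ts; rewrite mem_cat ts orbT.
  have ceq : forall r : seq int, {subset r <= s ++ s'} -> 0 \in r -> forall n,
      cond_expect (Pn n) (B n) (@Fs R u u r \o window (In n) u u) =
      fine (Pn n (Eset (In n) r)) / fine (Pn n (B n)).
    move=> r rs r0 n; rewrite /cond_expect (Rint_Fs (mIn n) (mB n) (hb r rs)); last first.
      by apply: aeW => w t _; exact: h01n.
    by rewrite setIidl // => w /(_ 0 r0).
  have Lr : forall r : seq int, {subset r <= s ++ s'} ->
      Rintegral P setT (@Fs R u u r \o window I u u) = fine (P (Eset I r)).
    move=> r rs; rewrite (Rint_Fs mI measurableT (hb r rs)) ?setIT //.
    exact: ae_all.
  have H1 := lim u u isT isT _ (Fs_bounded R u u s).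
  have H2 := lim u u isT isT _ (Fs_bounded R u u s').
  have eqseq : (fun n => cond_expect (Pn n) [set w | In n 0 w = 1] (@Fs R u u s \o window (In n) u u))
             = (fun n => cond_expect (Pn n) [set w | In n 0 w = 1] (@Fs R u u s' \o window (In n) u u)).
    apply/funext => n; rewrite (ceq s ss s0) (ceq s' ss' s'0); congr (fine _ / _).
    rewrite -Eset_shift; apply/esym.
    exact: (stat n (- a) s (fun=> [set 1]) (fun=> measurable_set1 _)).
  rewrite eqseq in H1.
  have := etrans (esym (norm_cvg_lim H1)) (norm_cvg_lim H2).
  rewrite (Lr s ss) (Lr s' ss') -Eset_shift -/s' => hfine.
  have f1 := fin_num_measure P _ (Eset_measurable s mI).
  have f2 : P (Eset I s') \is a fin_num by apply: fin_num_measure; exact: Eset_measurable.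
  by rewrite -(fineK f1) hfine fineK // Eset_shift.
pose M N := (N + absz a)%N.
pose sN N := [seq t <- [seq (k%:Z - (M N)%:Z)%R | k <- iota 0 (M N + M N).+1] | `[< A t >]].
have memsN : forall N t, t \in sN N <-> A t /\ (absz t <= M N)%N.
  move=> N t; rewrite mem_filter; split.
    case/andP=> /asboolP At /mapP [k]; rewrite mem_iota /M => /andP[_ kM] tE; split => //.
    rewrite tE; lia.
  case=> At tM; apply/andP; split; first exact/asboolP.
  move: tM; rewrite /M => tM.
  apply/mapP; exists (absz (t + (N + absz a)%N%:Z)%R); [rewrite mem_iota; lia | lia].
pose F N := Eset I (sN N).
pose G N := Eset (fun t => I (t - a)) (sN N).
have A0' : A 0 by rewrite -in_setE.
have aA' : A a by rewrite -in_setE.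
have PFG : P \o F = P \o G.
  apply/funext => N /=; apply: fin; apply/memsN; split => //; rewrite /M; lia.
have capF : \bigcap_N F N = \bigcap_(t in A) (I t @^-1` [set 1]).
  apply/seteqP; split => w /= h.
    move=> t At; apply: (h (absz t) Logic.I t); apply/memsN; split => //; rewrite /M; lia.
  by move=> N _ t /memsN [At _]; exact: h.
have capG : \bigcap_N G N = \bigcap_(t in A) (I (t - a) @^-1` [set 1]).
  apply/seteqP; split => w /= h.
    move=> t At; apply: (h (absz t) Logic.I t); apply/memsN; split => //; rewrite /M; lia.
  by move=> N _ t /memsN [At _]; exact: h.
have mIa : is_process (fun t => I (t - a)) by move=> t; exact: mI.
have decF : nonincreasing_seq F.
  move=> n m nm; rewrite subsetEset => w h t /memsN [At tM]; apply: h; apply/memsN; split => //; move: tM; rewrite /M; lia.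
have decG : nonincreasing_seq G.
  move=> n m nm; rewrite subsetEset => w h t /memsN [At tM]; apply: h; apply/memsN; split => //; move: tM; rewrite /M; lia.
have cvgF := @nonincreasing_cvg_mu _ _ _ P F
  (le_lt_trans (probability_le1 P (Eset_measurable _ mI)) (ltry _))
  (fun N => Eset_measurable _ mI) (bigcapT_measurable (fun N => Eset_measurable _ mI)) decF.
have cvgG := @nonincreasing_cvg_mu _ _ _ P G
  (le_lt_trans (probability_le1 P (Eset_measurable _ mIa)) (ltry _))
  (fun N => Eset_measurable _ mIa) (bigcapT_measurable (fun N => Eset_measurable _ mIa)) decG.
rewrite -capF -capG -(cvg_lim (@ereal_hausdorff R) cvgF) -(cvg_lim (@ereal_hausdorff R) cvgG).
by rewrite PFG.
Qed.
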